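(* Let $n\ge 1$, let $a(x),b(x)\in R_n=\mathbb{F}_2[x]/\langle x^n-1\rangle$, and let $C=\langle a(x)+\omega b(x)\rangle\subseteq\mathbb{F}_4^n$ be the one-generator additive cyclic code they define, with $\dim_{\mathbb{F}_2}(C)=k$. Then there exists a binary quantum stabilizer code, which is a generalized bicycle code, with parameters $[[2n,\,2(n-k),\,d]]$, where $$d\ \ge\ d\big((C^R)^{\perp_s}\setminus C\big)\ \ge\ d\big((C^R)^{\perp_s}\big).$$ In particular, if $C$ is palindromic, i.e. $C=C^R$, then $d\ge d(C^{\perp_s}\setminus C)\ge d(C^{\perp_s})$.
   Context: $\mathbb{F}_4=\{0,1,\omega,\omega^2\}$ with $\omega^2=\omega+1$. Vectors of $\mathbb{F}_4^n$ are written as polynomials $\sum_{i=0}^{n-1}v_ix^i$ with $v_i\in\mathbb{F}_4$, indices modulo $n$; every such vector is uniquely $m(x)+\omega n(x)$ with $m,n\in R_n$ (binary polynomials). An additive code is an $\mathbb{F}_2$-subspace of $\mathbb{F}_4^n$; $\langle a(x)+\omega b(x)\rangle$ denotes the $\mathbb{F}_2$-span of $\{x^i(a(x)+\omega b(x)):0\le i\le n-1\}$ (products computed modulo $x^n-1$). The reciprocal code is $C^R=\langle a(x^{-1})+\omega b(x^{-1})\rangle$, where $x^{-1}=x^{n-1}$ in $R_n$. The symplectic inner product of $(a_i+\omega b_i)_i$ and $(c_i+\omega d_i)_i$ (with $a_i,b_i,c_i,d_i\in\mathbb{F}_2$) is $\sum_i (a_id_i+b_ic_i)\in\mathbb{F}_2$,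 and $D^{\perp_s}$ denotes the set of vectors symplectically orthogonal to all of an additive code $D$. For a set $S$ of vectors, $d(S)$ is the minimum Hamming weight (number of nonzero coordinates) of a nonzero element of $S$. A generalized bicycle (GB) code defined by $a(x),b(x)\in R_n$ is the CSS code on $2n$ qubits whose X-stabilizer group corresponds to $\{(c(x)a(x),c(x)b(x)):c\in R_n\}\subseteq\mathbb{F}_2^{2n}$ and Z-stabilizer group to $\{(c(x)b(x^{-1}),c(x)a(x^{-1})):c\in R_n\}$; an $[[N,K,D]]$ code has $N$ physical qubits, $K$ logical qubits and minimum distance $D$. *)

(* Defs.v *)
From HB Require Import structures.
From mathcomp Require Import all_boot all_order all_algebra.
Set Implicit Arguments.
Unset Strict Implicit.
Unset Printing Implicit Defensive.
Import GRing.Theory.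
Local Open Scope ring_scope.

(* R_n = F_2[x]/<x^n - 1>: a binary polynomial sum_{i<n} p_i x^i is its
   coefficient row vector p : 'rV['F_2]_n. *)

Definition cmul (n : nat) (p q : 'rV['F_2]_n) : 'rV['F_2]_n :=
  \row_(k < n) \sum_(i < n) \sum_(j < n | ((i + j) %% n)%N == k) p 0 i * q 0 j.

Definition xpow (n : nat) (i : 'I_n) : 'rV['F_2]_n := \row_(j < n) (j == i)%:R.

Definition xinvpow (n : nat) (i : 'I_n) : 'rV['F_2]_n :=
  \row_(j < n) (((i + j) %% n)%N == 0%N)%:R.

Definition recip (n : nat) (p : 'rV['F_2]_n) : 'rV['F_2]_n :=
  \sum_(i < n) p 0 i *: xinvpow i.

(* A vector m(x) + omega n(x) of F_4^n is represented by the binary row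
   vector row_mx m n : 'rV['F_2]_(n+n) (left half = m, right half = n). *)
Definition f4vec (n : nat) (m v : 'rV['F_2]_n) : 'rV['F_2]_(n + n) := row_mx m v.

Definition cyc_code (n : nat) (a b : 'rV['F_2]_n) : {vspace 'rV['F_2]_(n + n)} :=
  <<[seq f4vec (cmul (xpow i) a) (cmul (xpow i) b) | i <- enum 'I_n]>>%VS.

Definition recip_code (n : nat) (a b : 'rV['F_2]_n) : {vspace 'rV['F_2]_(n + n)} :=
  cyc_code (recip a) (recip b).

Definition symp (n : nat) (v w : 'rV['F_2]_(n + n)) : 'F_2 :=
  \sum_(i < n) (lsubmx v 0 i * rsubmx w 0 i + rsubmx v 0 i * lsubmx w 0 i).

Definition sdual (n : nat) (D : {vspace 'rV['F_2]_(n + n)}) : pred 'rV['F_2]_(n + n) :=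
  [pred v | [forall w, (w \in D) ==> (symp v w == 0)]].

Definition wtF4 (n : nat) (v : 'rV['F_2]_(n + n)) : nat :=
  #|[set i : 'I_n | (lsubmx v 0 i != 0) || (rsubmx v 0 i != 0)]|.

Definition wt2 (N : nat) (v : 'rV['F_2]_N) : nat := #|[set i : 'I_N | v 0 i != 0]|.

(* minimum weight of a nonzero element of S; the value (n+n).+1, exceeding
   every possible weight, plays the role of +infinity for empty sets *)
Definition dF4 (n : nat) (S : pred 'rV['F_2]_(n + n)) : nat :=
  \big[minn/(n + n).+1]_(v | (v \in S) && (v != 0)) wtF4 v.

Definition dot (N : nat) (v w : 'rV['F_2]_N) : 'F_2 := \sum_(i < N) v 0 i * w 0 i.

Definition GB_X (n : nat) (a b : 'rV['F_2]_n) : {vspace 'rV['F_2]_(n + n)} :=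
  <<[seq row_mx (cmul c a) (cmul c b) | c : 'rV['F_2]_n]>>%VS.

Definition GB_Z (n : nat) (a b : 'rV['F_2]_n) : {vspace 'rV['F_2]_(n + n)} :=
  <<[seq row_mx (cmul c (recip b)) (cmul c (recip a)) | c : 'rV['F_2]_n]>>%VS.

Definition css_K (N : nat) (SX SZ : {vspace 'rV['F_2]_N}) : nat :=
  (N - \dim SX - \dim SZ)%N.

Definition logX (N : nat) (SX SZ : {vspace 'rV['F_2]_N}) : pred 'rV['F_2]_N :=
  [pred v | [forall w, (w \in SZ) ==> (dot v w == 0)] && (v \notin SX)].
Definition logZ (N : nat) (SX SZ : {vspace 'rV['F_2]_N}) : pred 'rV['F_2]_N :=
  [pred v | [forall w, (w \in SX) ==> (dot v w == 0)] && (v \notin SZ)].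

(* minimum distance of the CSS code (value N.+1 = +infinity if no logical
   operator exists) *)
Definition css_dist (N : nat) (SX SZ : {vspace 'rV['F_2]_N}) : nat :=
  minn (\big[minn/N.+1]_(v | v \in logX SX SZ) wt2 v)
       (\big[minn/N.+1]_(v | v \in logZ SX SZ) wt2 v).

(* Main.v *)
Require Import Defs.
From HB Require Import structures.
From mathcomp Require Import all_boot all_order all_algebra all_field zify.
Import GRing.Theory.
Local Open Scope ring_scope.

Lemma F2cases (x : 'F_2) : x = 0 \/ x = 1.
Proof. by case: x => [[|[|//]]] ?; [left|right]; apply/val_inj. Qed.

Lemma span_img m p (f : 'rV['F_2]_m -> 'rV['F_2]_p) :
  (forall x y, f (x + y) = f x + f y) -> forall v,
  reflect (exists c, v = f c) (v \in <<[seq f c | c : 'rV['F_2]_m]>>%VS).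
Proof.
move=> fD v; have f0 : f 0 = 0.
  by have := fD 0 0; rewrite addr0 => /eqP; rewrite -subr_eq subrr eq_sym => /eqP.
have fZ x c : f (x *: c) = x *: f c.
  by case: (F2cases x) => ->; rewrite ?scale0r ?scale1r.
apply: (iffP idP) => [vX | [c ->]]; last by apply: memv_span; apply: image_f.
rewrite (coord_span (X := in_tuple _) vX).
apply: (big_rec (fun x => exists c, x = f c)); first by exists 0.
move=> i x _ [c ->].
have /imageP [d _ ->] : (in_tuple [seq f c | c : 'rV['F_2]_m])`_i \in [seq f c | c : 'rV['F_2]_m].
  by apply: mem_nth.
by exists (coord (in_tuple [seq f c0 | c0 : 'rV['F_2]_m]) i v *: d + c); rewrite fD fZ.
Qed.

Section R.
Variable n : nat.
Local Notation N := n.+1.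
Implicit Types p q r c a b : 'rV['F_2]_N.

Lemma addZp_val (i j : 'I_N) : ((i + j) %% N)%N = (i + j)%R :> nat.
Proof. by []. Qed.

Lemma cmulE p q k : cmul p q 0 k = \sum_i p 0 i * q 0 (k - i).
Proof.
rewrite mxE; apply: eq_bigr => i _.
rewrite (big_pred1 (k - i)) // => j /=.
have -> : (((i + j) %% N)%N == k) = ((i + j)%R == k) by [].
apply/eqP/eqP => [<-|->]; first by rewrite addrC addKr.
by rewrite addrC subrK.
Qed.

Lemma recipE p j : recip p 0 j = p 0 (- j).
Proof.
rewrite /recip summxE.
rewrite (eq_bigr (fun i => if i == - j then p 0 i else 0)); last first.
  move=> i _; rewrite !mxE.
  have -> : (((i + j) %% N)%N == 0%N) = ((i + j)%R == 0) by [].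
  by rewrite addr_eq0; case: eqP; rewrite ?mulr1 ?mulr0.
by rewrite -big_mkcond big_pred1_eq.
Qed.

Lemma cmulC p q : cmul p q = cmul q p.
Proof.
apply/rowP => k; rewrite !cmulE (reindex_inj (inv_inj (subKr k))) /=.
by apply: eq_bigr => i _; rewrite subKr mulrC.
Qed.

Lemma cmulA p q r : cmul (cmul p q) r = cmul p (cmul q r).
Proof.
apply/rowP => k; rewrite !cmulE.
under eq_bigr do rewrite cmulE mulr_suml.
rewrite exchange_big /=; apply: eq_bigr => j _.
rewrite cmulE mulr_sumr (reindex_inj (addIr j)) /=.
apply: eq_bigr => i _; rewrite addrK mulrA; congr (_ * r 0 _).
by rewrite opprD addrA addrAC.
Qed.

Lemma recipK p : recip (recip p) = p.
Proof. by apply/rowP => k; rewrite !recipE opprK. Qed.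

Lemma recip_mul p q : recip (cmul p q) = cmul (recip p) (recip q).
Proof.
apply/rowP => k; rewrite recipE !cmulE (reindex_inj oppr_inj) /=.
apply: eq_bigr => i _; rewrite !recipE opprK; congr (_ * q 0 _).
by rewrite opprB addrC.
Qed.

Lemma dotE p q : dot p q = cmul p (recip q) 0 0.
Proof. by rewrite cmulE; apply: eq_bigr => i _; rewrite recipE sub0r opprK. Qed.

Lemma recip00 p : recip p 0 0 = p 0 0.
Proof. by rewrite recipE oppr0. Qed.

Lemma cmulDl p p' q : cmul (p + p') q = cmul p q + cmul p' q.
Proof.
apply/rowP => k; rewrite [RHS]mxE !cmulE -big_split /=.
by apply: eq_bigr => i _; rewrite mxE mulrDl.
Qed.

Lemma cmulZl (x : 'F_2) p q : cmul (x *: p) q = x *: cmul p q.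
Proof.
apply/rowP => k; rewrite [RHS]mxE !cmulE mulr_sumr.
by apply: eq_bigr => i _; rewrite mxE mulrA.
Qed.

Lemma xpow_decomp c : c = \sum_i c 0 i *: xpow i.
Proof.
apply/rowP => j; rewrite summxE.
rewrite (eq_bigr (fun i => if i == j then c 0 i else 0)); last first.
  by move=> i _; rewrite !mxE eq_sym; case: eqP; rewrite ?mulr1 ?mulr0.
by rewrite -big_mkcond big_pred1_eq.
Qed.


Lemma cmul0l q : cmul 0 q = 0.
Proof. by apply/rowP => k; rewrite cmulE mxE big1 // => i _; rewrite mxE mul0r. Qed.

Lemma cmul_sum (I : finType) (F : I -> 'rV['F_2]_N) q :
  cmul (\sum_i F i) q = \sum_i cmul (F i) q.
Proof. exact: (big_morph _ (fun x y => cmulDl x y q) (cmul0l q)). Qed.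

Lemma row_mx_sum (I : finType) (F G : I -> 'rV['F_2]_N) :
  row_mx (\sum_i F i) (\sum_i G i) = \sum_i row_mx (F i) (G i).
Proof.
symmetry; apply: (big_rec3 (fun x y z => x = row_mx y z)); first by rewrite row_mx0.
by move=> i x y z _ ->; rewrite add_row_mx.
Qed.

Lemma memGBX a b v :
  reflect (exists c, v = row_mx (cmul c a) (cmul c b)) (v \in GB_X a b).
Proof.
have fD : forall x y, (fun c => row_mx (cmul c a) (cmul c b)) (x + y) = 
  (fun c => row_mx (cmul c a) (cmul c b)) x + (fun c => row_mx (cmul c a) (cmul c b)) y.
  by move=> x y; rewrite /= !cmulDl add_row_mx.
exact: (@span_img _ _ _ fD v).
Qed.

Lemma memGBZ a b v :
  reflect (exists c, v = row_mx (cmul c (recip b)) (cmul c (recip a))) (v \in GB_Z a b).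
Proof.
have fD : forall x y, (fun c => row_mx (cmul c (recip b)) (cmul c (recip a))) (x + y) = 
  (fun c => row_mx (cmul c (recip b)) (cmul c (recip a))) x + (fun c => row_mx (cmul c (recip b)) (cmul c (recip a))) y.
  by move=> x y; rewrite /= !cmulDl add_row_mx.
exact: (@span_img _ _ _ fD v).
Qed.

Lemma cyc_GBX a b : cyc_code a b = GB_X a b.
Proof.
apply/eqP; rewrite eqEsubv; apply/andP; split; apply/span_subvP => w.
  by case/mapP => i _ ->; apply/memGBX; exists (xpow i).
case/imageP => c _ ->.
have -> : row_mx (cmul c a) (cmul c b) =
   \sum_i c 0 i *: row_mx (cmul (xpow i) a) (cmul (xpow i) b).
  rewrite {1 2}(xpow_decomp c) !cmul_sum row_mx_sum.
  by apply: eq_bigr => i _; rewrite !cmulZl scale_row_mx.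
apply: rpred_sum => i _; apply: rpredZ; apply: memv_span.
by apply: map_f; rewrite mem_enum.
Qed.

Definition phi (v : 'rV['F_2]_(N + N)) : 'rV['F_2]_(N + N) :=
  row_mx (recip (rsubmx v)) (recip (lsubmx v)).

Lemma phiK : involutive phi.
Proof. by move=> v; rewrite /phi row_mxKl row_mxKr !recipK hsubmxK. Qed.

Lemma phiXZ a b v : v \in GB_X a b -> phi v \in GB_Z a b.
Proof.
case/memGBX => c ->; apply/memGBZ; exists (recip c).
by rewrite /phi row_mxKl row_mxKr !recip_mul.
Qed.

Lemma phiZX a b v : v \in GB_Z a b -> phi v \in GB_X a b.
Proof.
case/memGBZ => c ->; apply/memGBX; exists (recip c).
by rewrite /phi row_mxKl row_mxKr !recip_mul !recipK.
Qed.

Lemma card_le (U V : {vspace 'rV['F_2]_(N + N)}) :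
  (forall v, v \in U -> phi v \in V) -> (\dim U <= \dim V)%N.
Proof.
move=> UV.
have : (#|U| <= #|V|)%N.
  rewrite -(card_imset (mem U) (can_inj phiK)).
  by apply: subset_leq_card; apply/subsetP => _ /imsetP [v vU ->]; apply: UV.
by rewrite !card_vspace card_Fp // leq_exp2l.
Qed.

Lemma dimXZ a b : \dim (GB_X a b) = \dim (GB_Z a b).
Proof.
by apply/eqP; rewrite eqn_leq !card_le //; [apply: phiZX | apply: phiXZ].
Qed.

Lemma F2_add2 (x : 'F_2) : x + x = 0.
Proof. by case: (F2cases x) => ->; [rewrite addr0 | apply/val_inj]. Qed.

Lemma cmulCA p q r : cmul p (cmul q r) = cmul q (cmul p r).
Proof. by rewrite -!cmulA (cmulC p q). Qed.

Lemma dot_recip p q : dot (recip p) q = dot p (recip q).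
Proof. by rewrite !dotE recipK -recip_mul recip00. Qed.

Lemma dot_row (v : 'rV['F_2]_(N + N)) x y :
  dot v (row_mx x y) = dot (lsubmx v) x + dot (rsubmx v) y.
Proof.
rewrite /dot big_split_ord /=; congr (_ + _); apply: eq_bigr => i _.
  by rewrite row_mxEl mxE.
by rewrite row_mxEr mxE.
Qed.

Lemma symp_dot (v w : 'rV['F_2]_(N + N)) :
  symp v w = dot v (row_mx (rsubmx w) (lsubmx w)).
Proof. by rewrite dot_row /symp /dot big_split. Qed.

Lemma GB_orth a b v w : v \in GB_X a b -> w \in GB_Z a b -> dot v w = 0.
Proof.
case/memGBX => c ->; case/memGBZ => d ->.
rewrite dot_row row_mxKl row_mxKr !dotE !recip_mul !recipK.
rewrite !cmulA (cmulCA a) (cmulCA b) (cmulC b a).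
exact: F2_add2.
Qed.

Lemma bigmin_leP (T : finType) (P : pred T) (F : T -> nat) m u :
  P u -> (\big[minn/m]_(v | P v) F v <= F u)%N.
Proof.
move=> Pu; have : u \in index_enum T by rewrite mem_index_enum.
elim: (index_enum T) => [//|x r IH]; rewrite inE big_cons => /orP [/eqP <-|ur].
  by rewrite Pu geq_minl.
by case: ifP => _; [apply: leq_trans (geq_minr _ _) _|]; apply: IH.
Qed.

Lemma bigmin_idx (T : finType) (P : pred T) (F : T -> nat) m :
  (\big[minn/m]_(v | P v) F v <= m)%N.
Proof. by elim/big_rec: _ => // i x _ h; rewrite geq_min h orbT. Qed.

Lemma le_bigmin (T : finType) (P : pred T) (F : T -> nat) m k :
  (forall v, P v -> k <= F v)%N -> (k <= m)%N -> (k <= \big[minn/m]_(v | P v) F v)%N.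
Proof. by move=> h km; elim/big_rec: _ => // i x Pi kx; rewrite leq_min h. Qed.

Lemma dF4_mono (S T : pred 'rV['F_2]_(N + N)) :
  (forall v, v \in T -> v \in S) -> (dF4 S <= dF4 T)%N.
Proof.
move=> TS; apply: le_bigmin; last exact: bigmin_idx.
by move=> v /andP [vT v0]; apply: bigmin_leP; rewrite TS.
Qed.

Lemma wtF4_le (v : 'rV['F_2]_(N + N)) : (wtF4 v <= wt2 v)%N.
Proof.
pose g (i : 'I_N) := if lsubmx v 0 i != 0 then lshift N i else rshift N i.
have ginj : injective g.
  move=> i j; rewrite /g; case: ifP => _; case: ifP => _ /(congr1 val) /= h;
    apply/val_inj => //=.
  - by move: (ltn_ord i); rewrite h ltnNge leq_addr.
  - by move: (ltn_ord j); rewrite -h ltnNge leq_addr.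
  - exact: (addnI h).
rewrite /wtF4 /wt2 -(card_imset _ ginj); apply: subset_leq_card.
apply/subsetP => y /imsetP [i iS ->]; move: iS; rewrite !inE /g => /orP h.
case: ifP => [|/negbFE/eqP l0]; first by rewrite mxE.
by case: h => h; [rewrite l0 eqxx in h | move: h; rewrite mxE].
Qed.

Lemma wtF4_phi v : wtF4 (phi v) = wtF4 v.
Proof.
rewrite /wtF4 -(card_preimset _ (@oppr_inj _ : injective (fun i : 'I_N => - i))).
apply: eq_card => i; rewrite !inE /phi row_mxKl row_mxKr !recipE.
by rewrite opprK orbC.
Qed.

Lemma memRC a b w : w \in recip_code a b ->
  exists c, w = row_mx (cmul c (recip a)) (cmul c (recip b)).
Proof. by rewrite /recip_code cyc_GBX => /memGBX. Qed.

Lemma claim3 a b :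
  (dF4 [pred v | (v \in sdual (recip_code a b)) && (v \notin cyc_code a b)]
     <= css_dist (GB_X a b) (GB_Z a b))%N.
Proof.
rewrite /css_dist leq_min; apply/andP; split;
  (apply: le_bigmin; last exact: bigmin_idx) => v.
- rewrite inE => /andP [/forallP orth vX].
  apply: leq_trans (wtF4_le v); apply: bigmin_leP.
  have v0 : v != 0 by apply: contraNneq vX => ->; exact: mem0v.
  rewrite v0 andbT inE /= cyc_GBX vX andbT.
  apply/forallP => w; apply/implyP => /memRC [c ->].
  rewrite symp_dot row_mxKl row_mxKr.
  apply: (implyP (orth _)); apply/memGBZ; by exists c.
rewrite inE => /andP [/forallP orth vZ].
apply: leq_trans (wtF4_le v); rewrite -wtF4_phi; apply: bigmin_leP.
have pX : phi v \notin GB_X a b.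
  by apply: contra vZ => /phiXZ; rewrite phiK.
have p0 : phi v != 0 by apply: contraNneq pX => ->; exact: mem0v.
rewrite p0 andbT inE /= cyc_GBX pX andbT.
apply/forallP => w; apply/implyP => /memRC [c ->].
rewrite symp_dot row_mxKl row_mxKr dot_row /phi row_mxKl row_mxKr !dot_recip.
rewrite !recip_mul !recipK addrC -dot_row.
have := orth (row_mx (cmul (recip c) a) (cmul (recip c) b)).
rewrite (_ : _ \in GB_X a b) //; apply/memGBX; by exists (recip c).
Qed.

End R.

Theorem theorem2 (n : nat) (a b : 'rV['F_2]_n) (k : nat) :
  (0 < n)%N ->
  \dim (cyc_code a b) = k ->
  (* the GB code defined by a, b is a valid CSS (stabilizer) code on 2n qubits *)
  (forall v w, v \in GB_X a b -> w \in GB_Z a b -> dot v w = 0) /\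
  (* with 2(n-k) logical qubits *)
  css_K (GB_X a b) (GB_Z a b) = (2 * (n - k))%N /\
  (* and minimum distance d >= d((C^R)^{perp_s} \ C) >= d((C^R)^{perp_s}) *)
  (dF4 [pred v | (v \in sdual (recip_code a b)) && (v \notin cyc_code a b)]
     <= css_dist (GB_X a b) (GB_Z a b))%N /\
  (dF4 (sdual (recip_code a b))
     <= dF4 [pred v | (v \in sdual (recip_code a b)) && (v \notin cyc_code a b)])%N /\
  (* palindromic case *)
  (recip_code a b = cyc_code a b ->
     (dF4 [pred v | (v \in sdual (cyc_code a b)) && (v \notin cyc_code a b)]
        <= css_dist (GB_X a b) (GB_Z a b))%N /\
     (dF4 (sdual (cyc_code a b))
        <= dF4 [pred v | (v \in sdual (cyc_code a b)) && (v \notin cyc_code a b)])%N).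
Proof.
case: n a b => [//|n] a b _ dimk.
have C4 : forall S : {vspace 'rV['F_2]_(n.+1 + n.+1)},
  (dF4 (sdual S) <= dF4 [pred v | (v \in sdual S) && (v \notin cyc_code a b)])%N.
  by move=> S; apply: dF4_mono => v; rewrite inE => /andP [].
have C3 := @claim3 n a b.
split; first exact: GB_orth.
split.
  rewrite /css_K -dimXZ -cyc_GBX dimk; lia.
split; first exact: C3.
split; first exact: C4.
by move=> H; rewrite H in C3; split.
Qed.
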